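(* Let $n\ge 3$, let $a_0,\ldots,a_{n-1}$ be indeterminates over $\mathbb{Q}$, $f=x^n+a_{n-1}x^{n-1}+\cdots+a_0$, and \[f_1(x,y)=\frac{f(y)-f(x)}{y-x},\qquad f_3(x,y)=\frac{f(y)-2f\left(\frac{x+y}{2}\right)+f(x)}{\frac{(y-x)^2}{2}}.\] Let $g_1(x,y)=f_1(x-y,x+y)$, $g_3(x,y)=f_3(x-y,x+y)$ and $G=\operatorname{res}(g_1,g_3,y)$. For each integer $m$ put $\varphi_m(x)=f^{(m)}(x)/m!$ if $1\le m\le n$ and $\varphi_m=0$ if $m\le0$ or $m>n$; let $M$ be the infinite matrix with entries $M_{2s-1,l}=\varphi_{2(l-s)+2}$, $M_{2s,l}=\varphi_{2(l-s)+1}$ ($s,l\ge1$) and $H$ its $(n-2)$th leading principal minor. Then $G=H^2$.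
   Context: $f^{(m)}$ is the $m$th derivative of $f$ with respect to $x$; $\operatorname{res}(\cdot,\cdot,y)$ is the Sylvester resultant with respect to $y$. *)

(* Defs.v *)
(* Polynomials over A := Q[a_0,...,a_{n-1}] = {mpoly rat[n]}. *)
From HB Require Import structures.
From mathcomp Require Import all_boot all_order all_algebra.
From mathcomp Require Import mpoly.
Set Implicit Arguments. Unset Strict Implicit. Unset Printing Implicit Defensive.
Import Order.TTheory GRing.Theory Num.Theory.
Local Open Scope ring_scope.

Section Defs.
Variable n : nat.
Local Notation A := {mpoly rat[n]}.

(* bivariate polynomials in x,y: {poly {poly A}}, outer variable y, inner x *)
Definition cc (c : A) : {poly {poly A}} := c%:P%:P.
Definition xB : {poly {poly A}} := ('X : {poly A})%:P.
Definition yB : {poly {poly A}} := 'X.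
Definition halfB : {poly {poly A}} := cc ((2%:R^-1 : rat)%:MP).

Definition fgen : {poly A} := 'X^n + \sum_(i < n) ('X_i)%:P * 'X^i.

Definition evalB (p : {poly A}) (u : {poly {poly A}}) := (map_poly cc p).[u].

Definition subst2 (h u v : {poly {poly A}}) : {poly {poly A}} :=
  (map_poly (fun q : {poly A} => evalB q u) h).[v].

(* f_1(x,y) = (f(y) - f(x)) / (y - x)  (exact division by the monic y - x) *)
Definition f1 : {poly {poly A}} :=
  (evalB fgen yB - evalB fgen xB) %/ (yB - xB).

(* f_3(x,y) = (f(y) - 2 f((x+y)/2) + f(x)) / ((y-x)^2/2)
            = 2 (f(y) - 2 f((x+y)/2) + f(x)) / (y-x)^2 (exact division, monic divisor) *)
Definition f3 : {poly {poly A}} :=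
  (2%:R * (evalB fgen yB - 2%:R * evalB fgen (halfB * (xB + yB)) + evalB fgen xB))
    %/ (yB - xB) ^+ 2.

Definition g1 : {poly {poly A}} := subst2 f1 (xB - yB) (xB + yB).
Definition g3 : {poly {poly A}} := subst2 f3 (xB - yB) (xB + yB).

Definition Gres : {poly A} := resultant g1 g3.

(* phi_m = f^(m)/m! for 1 <= m <= n, and 0 otherwise *)
Definition phi (m : int) : {poly A} :=
  if (1 <= m)%R && (m <= n%:Z)%R then fgen^`N(`|m|%N) else 0.

(* the infinite matrix M, 1-indexed: M_{2s-1,l} = phi_{2(l-s)+2}, M_{2s,l} = phi_{2(l-s)+1} *)
Definition Mentry (r l : nat) : {poly A} :=
  if odd r then phi (2%:Z * (l%:Z - (r.+1./2)%:Z) + 2)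
  else phi (2%:Z * (l%:Z - (r./2)%:Z) + 1).

Definition Hminor : {poly A} :=
  \det (\matrix_(i < n - 2, j < n - 2) Mentry i.+1 j.+1).

End Defs.

(* Main.v *)
Require Import Defs.
From HB Require Import structures.
From mathcomp Require Import all_boot all_order all_algebra all_fingroup.
From mathcomp Require Import mpoly zify ring.
Set Implicit Arguments. Unset Strict Implicit. Unset Printing Implicit Defensive.
Import Order.TTheory GRing.Theory Num.Theory.
Local Open Scope ring_scope.

Section MatLemmas.
Variable R : comNzRingType.

Lemma perm_of_nat N (f : nat -> nat) :
  (forall i, (i < N)%N -> (f i < N)%N) ->
  (forall i j, (i < N)%N -> (j < N)%N -> f i = f j -> i = j) ->
  {s : perm_of 'I_N | forall i : 'I_N, val (s i) = f i}.
Proof.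
move=> hf finj.
pose g (i : 'I_N) : 'I_N := Ordinal (hf i (ltn_ord i)).
have ginj : injective g.
  by move=> i j /(congr1 val) /= /finj h; apply/val_inj/h.
by exists (perm ginj) => i; rewrite permE.
Qed.

Lemma det_rowperm_sq N (Af Bf : nat -> nat -> R) (f : nat -> nat) :
  (forall i, (i < N)%N -> (f i < N)%N) ->
  (forall i j, (i < N)%N -> (j < N)%N -> f i = f j -> i = j) ->
  (forall i j, (i < N)%N -> (j < N)%N -> Af i j = Bf (f i) j) ->
  \det (\matrix_(i < N, j < N) Af i j) ^+ 2 =
  \det (\matrix_(i < N, j < N) Bf i j) ^+ 2.
Proof.
move=> hf finj hA.
have [s hs] := perm_of_nat hf finj.
have -> : \matrix_(i < N, j < N) Af i j = row_perm s (\matrix_(i < N, j < N) Bf i j).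
  by apply/matrixP => i j; rewrite !mxE hs hA.
by rewrite row_permE det_mulmx det_perm exprMn sqrr_sign mul1r.
Qed.

Lemma det_conj N (Af Bf : nat -> nat -> R) (f : nat -> nat) :
  (forall i, (i < N)%N -> (f i < N)%N) ->
  (forall i j, (i < N)%N -> (j < N)%N -> f i = f j -> i = j) ->
  (forall i j, (i < N)%N -> (j < N)%N -> Af i j = Bf (f i) (f j)) ->
  \det (\matrix_(i < N, j < N) Af i j) =
  \det (\matrix_(i < N, j < N) Bf i j).
Proof.
move=> hf finj hA.
have [s hs] := perm_of_nat hf finj.
have -> : \matrix_(i < N, j < N) Af i j =
   row_perm s (col_perm s (\matrix_(i < N, j < N) Bf i j)).
  by apply/matrixP => i j; rewrite !mxE !hs hA.
rewrite row_permE col_permE !det_mulmx !det_perm odd_permV.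
by rewrite mulrCA -expr2 sqrr_sign mulr1.
Qed.

Lemma det_parity N2 (Sf : nat -> nat -> R) :
  \det (\matrix_(i < N2 + N2, j < N2 + N2)
          (if odd i == odd j then Sf i./2 j./2 else 0)) =
  \det (\matrix_(a < N2, b < N2) Sf a b) ^+ 2.
Proof.
pose Bf k l := if (k < N2)%N && (l < N2)%N then Sf k l
   else if (N2 <= k)%N && (N2 <= l)%N then Sf (k - N2)%N (l - N2)%N else 0.
pose f i := if odd i then (N2 + i./2)%N else i./2.
rewrite (@det_conj (N2 + N2)%N (fun i j => if odd i == odd j then Sf i./2 j./2 else 0) Bf f).
- set S := \matrix_(a < N2, b < N2) Sf a b.
  have -> : \matrix_(i < N2 + N2, j < N2 + N2) Bf i j = block_mx S 0 0 S.
    apply/matrixP => k l.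
    rewrite -(splitK k) -(splitK l).
    case: (split k) => a; case: (split l) => b;
      rewrite ?block_mxEul ?block_mxEur ?block_mxEdl ?block_mxEdr !mxE /Bf /=.
    + by rewrite !ltn_ord.
    + by rewrite ltn_ord /= ltnNge leq_addr /= leqNgt ltn_ord.
    + by rewrite ltnNge leq_addr /= leqNgt ltn_ord.
    + rewrite ltnNge leq_addr /= !leq_addr /=.
      by rewrite !(addKn).
  by rewrite det_lblock expr2.
- move=> i hi; rewrite /f; case: ifP => _; lia.
- move=> i j hi hj; rewrite /f; case: ifP => oi; case: ifP => oj; lia.
- move=> i j hi hj; rewrite /f /Bf.
  case oi: (odd i); case oj: (odd j) => /=.
  + have -> : (N2 + i./2 < N2)%N = false by lia.
    by rewrite /= !leq_addr !addKn.
  + have -> : (N2 + i./2 < N2)%N = false by lia.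
    have -> : (N2 <= j./2)%N = false by lia.
    by rewrite /= andbF.
  + have -> : (N2 + j./2 < N2)%N = false by lia.
    have -> : (N2 <= i./2)%N = false by lia.
    by rewrite /= andbF.
  + have -> : (i./2 < N2)%N by lia.
    have -> : (j./2 < N2)%N by lia.
    by [].
Qed.

End MatLemmas.

Definition Sylf (R : nzRingType) (p q : {poly R}) (i j : nat) : R :=
  if (i < (size q).-1)%N then p`_(j - i) *+ (i <= j)%N
  else q`_(j - (i - (size q).-1)) *+ (i - (size q).-1 <= j)%N.

Lemma resE (R : nzRingType) (p q : {poly R}) N :
  ((size q).-1 + (size p).-1)%N = N ->
  resultant p q = \det (\matrix_(i < N, j < N) Sylf p q i j).
Proof.
move=> e; case: N / e; rewrite /resultant; congr (\det _).
apply/matrixP => i j; rewrite Sylvester_mxE mxE /Sylf.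
case: splitP => k -> /=.
  by [].
by rewrite addKn.
Qed.

Lemma res_compX2 (R : idomainType) (p q : {poly R}) :
  p != 0 -> q != 0 ->
  resultant (p \Po 'X^2) (q \Po 'X^2) = resultant p q ^+ 2.
Proof.
move=> p0 q0.
have sX : size ('X^2 : {poly R}) = 3%N by rewrite size_polyXn.
have szp : (size (p \Po 'X^2)).-1 = ((size p).-1 * 2)%N by rewrite size_comp_poly sX.
have szq : (size (q \Po 'X^2)).-1 = ((size q).-1 * 2)%N by rewrite size_comp_poly sX.
set kq := (size q).-1 in szq *; set kp := (size p).-1 in szp *.
rewrite (@resE _ p q (kq + kp)) //.
rewrite (@resE _ _ _ (kq + kp + (kq + kp))); last by rewrite szp szq; lia.
rewrite -det_parity; congr (\det _); apply/matrixP => i j; rewrite !mxE.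
have hi := ltn_ord i; have hj := ltn_ord j.
move: (nat_of_ord i) (nat_of_ord j) hi hj => {}i {}j hi hj.
rewrite /Sylf szq -/kq !coef_comp_poly_Xn // !dvdn2.
case: (boolP (odd i == odd j)) => /eqP hij.
- have -> : (i < kq * 2)%N = (i./2 < kq)%N by lia.
  case: ifP => hk.
  + have -> : (i <= j)%N = (i./2 <= j./2)%N by lia.
    case: (leqP i./2 j./2) => hl; last by rewrite !mulr0n.
    have -> : odd (j - i) = false by lia.
    by have -> : ((j - i) %/ 2 = j./2 - i./2)%N by lia.
  + have -> : (i - kq * 2 <= j)%N = (i./2 - kq <= j./2)%N by lia.
    case: (leqP (i./2 - kq) j./2) => hl; last by rewrite !mulr0n.
    have -> : odd (j - (i - kq * 2)) = false by lia.
    by have -> : ((j - (i - kq * 2)) %/ 2 = j./2 - (i./2 - kq))%N by lia.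
- case: ifP => hk.
  + case: (leqP i j) => hl; last by rewrite mulr0n.
    by have -> : odd (j - i) = true by lia.
  + case: (leqP (i - kq * 2) j) => hl; last by rewrite mulr0n.
    by have -> : odd (j - (i - kq * 2)) = true by lia.
Qed.
Section Poly.
Variable n : nat.
Local Notation A := {mpoly rat[n]}.
Local Notation B := {poly {poly A}}.
Local Notation cc := (@cc n).
Local Notation xB := (@xB n).
Local Notation yB := (@yB n).
Local Notation evalB := (@evalB n).

Definition ccM : {rmorphism A -> B} := (@polyC {poly A}) \o (@polyC A).
Definition EV (u : B) : {rmorphism {poly A} -> B} :=
  horner_eval u \o map_poly ccM.
Definition SB (u v : B) : {rmorphism B -> B} := horner_eval v \o map_poly (EV u).

Lemma evalBE p u : evalB p u = EV u p. Proof. by []. Qed.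
Lemma subst2E h u v : subst2 h u v = SB u v h. Proof. by []. Qed.
Lemma ccE c : cc c = ccM c. Proof. by []. Qed.

Lemma EV_C u c : EV u c%:P = ccM c.
Proof. by rewrite /EV /= map_polyC horner_evalE hornerC. Qed.
Lemma EV_X u : EV u 'X = u.
Proof. by rewrite /EV /= map_polyX horner_evalE hornerX. Qed.

Lemma comp_poly_sum N (E : nat -> {poly A}) (w : B) :
  (\poly_(j < N) E j) \Po w = \sum_(j < N) (E j)%:P * w ^+ j.
Proof.
rewrite poly_def (big_morph (fun p => p \Po w) (fun p q => comp_polyD p q w) (comp_poly0 w)).
by apply: eq_bigr => j _; rewrite comp_polyZ comp_Xn_poly mul_polyC.
Qed.

Lemma taylor_sum (p : {poly A}) (w : B) N : (size p <= N)%N ->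
  evalB p (xB + w) = \sum_(j < N) (p^`N(j))%:P * w ^+ j.
Proof.
move=> hN.
have pE : p = \sum_(i < N) p`_i *: 'X^i.
  by rewrite -poly_def; apply/polyP => k; rewrite coef_poly; case: ltnP => // /(leq_trans hN) /leq_sizeP ->.
have -> : \sum_(j < N) (p^`N(j))%:P * w ^+ j =
   \sum_(j < N) \sum_(i < N) ccM p`_i * (xB ^+ (i - j) * w ^+ j) *+ 'C(i, j).
  apply: eq_bigr => j _.
  rewrite {1}pE linear_sum /= rmorph_sum mulr_suml; apply: eq_bigr => i _.
  rewrite linearZ /= nderivnXn -mul_polyC rmorphM rmorphMn /= rmorphXn /=.
  by rewrite -mulrnAr -mulrA mulrnAl.
rewrite exchange_big /= evalBE {1}pE rmorph_sum; apply: eq_bigr => i _.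
rewrite -mul_polyC rmorphM rmorphXn EV_C EV_X.
rewrite exprDn mulr_sumr.
have hi : (i.+1 <= N)%N by apply: ltn_ord.
rewrite (big_ord_widen _ (fun j => ccM p`_i * ((xB ^+ (i - j) * w ^+ j) *+ 'C(i, j))) hi).
rewrite big_mkcond /=; apply: eq_bigr => j _.
case: ltnP => hj; first by rewrite mulrnAr.
by rewrite bin_small // !mulr0n.
Qed.


Lemma natB_neq0 k : (0 < k)%N -> (k%:R : B) != 0.
Proof.
move=> hk; rewrite -(rmorph_nat ccM) /= !polyC_eq0.
by rewrite -(rmorph_nat (@mpolyC n rat)) mpolyC_eq0 pnatr_eq0 -lt0n.
Qed.

Lemma fgen_coef k : (n <= k)%N -> (fgen n)`_k = (k == n)%:R.
Proof.
move=> hk; rewrite /fgen coefD coefXn coef_sum big1 ?addr0 // => i _.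
rewrite coefCM coefXn; have -> : (k == i) = false by apply/eqP => e; move: (ltn_ord i); lia.
by rewrite mulr0.
Qed.

Lemma size_fgen : size (fgen n) = n.+1.
Proof.
apply/eqP; rewrite eqn_leq; apply/andP; split.
  by apply/leq_sizeP => k hk; rewrite fgen_coef ?(ltnW hk) //; case: eqP => // e; lia.
by rewrite ltnNge; apply/negP => /leq_sizeP /(_ n (leqnn n)); rewrite fgen_coef // eqxx; apply/eqP; exact: oner_neq0.
Qed.

Definition phiN k : {poly A} := (fgen n)^`N(k).

Lemma phiN_gt k : (n < k)%N -> phiN k = 0.
Proof. by move=> hk; apply: nderivn_poly0; rewrite size_fgen. Qed.

Lemma phiN_neq0 k : (k <= n)%N -> phiN k != 0.
Proof.
move=> hk; apply/eqP => /(congr1 (fun p : {poly A} => p`_(n - k))).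
rewrite coef_nderivn coef0 subnKC // fgen_coef // eqxx => /eqP.
rewrite -(rmorph_nat (@mpolyC n rat)) mpolyC_eq0 pnatr_eq0 => /eqP.
by have := bin_gt0 n k; rewrite hk; lia.
Qed.

Definition Tay : B := \poly_(j < n.+1) phiN j.

Lemma taylor w : evalB (fgen n) (xB + w) = Tay \Po w.
Proof. by rewrite (@taylor_sum _ _ n.+1) ?size_fgen // comp_poly_sum. Qed.

Lemma coef_Tay k : Tay`_k = phiN k.
Proof. by rewrite coef_poly; case: ltnP => // hk; rewrite phiN_gt. Qed.


Lemma EV_sum p w : EV w p = \sum_(i < size p) ccM p`_i * w ^+ i.
Proof.
rewrite -{1}[p]coefK poly_def rmorph_sum; apply: eq_bigr => i _.
by rewrite -mul_polyC rmorphM rmorphXn EV_C EV_X.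
Qed.

Lemma SBE u v r : SB u v r = (map_poly (EV u) r).[v]. Proof. by []. Qed.
Lemma SB_cc u v c : SB u v (ccM c) = ccM c.
Proof. by rewrite SBE (_ : ccM c = (c%:P)%:P) // map_polyC hornerC; apply: EV_C. Qed.
Lemma SB_x u v : SB u v xB = u.
Proof. by rewrite SBE map_polyC hornerC; apply: EV_X. Qed.
Lemma SB_y u v : SB u v yB = v.
Proof. by rewrite SBE map_polyX hornerX. Qed.
Lemma SB_evalB u v p w : SB u v (evalB p w) = evalB p (SB u v w).
Proof.
rewrite !evalBE !EV_sum rmorph_sum; apply: eq_bigr => i _.
by rewrite rmorphM rmorphXn SB_cc.
Qed.

Lemma psplit1 (r : B) : r = (r`_0)%:P + drop_poly 1 r * 'X.
Proof.
rewrite -{1}(poly_take_drop 1 r) expr1; congr (_ + _).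
by apply/polyP => k; rewrite coef_take_poly coefC; case: k.
Qed.

Lemma psplit2 (r : B) : r = (r`_0)%:P + (r`_1)%:P * 'X + drop_poly 2 r * 'X^2.
Proof.
rewrite -{1}(poly_take_drop 2 r); congr (_ + _).
apply/polyP => k; rewrite coef_take_poly coefD coefC coefCM coefX.
by case: k => [|[|k]] //=; rewrite ?mulr1 ?mulr0 ?addr0 ?add0r.
Qed.

Lemma EFx : evalB (fgen n) xB = (Tay`_0)%:P.
Proof. by have := taylor 0; rewrite addr0 comp_poly0r. Qed.

Lemma EFy : evalB (fgen n) yB = Tay \Po (yB - xB).
Proof. by rewrite -taylor addrC subrK. Qed.

Lemma y2_neq0 : (yB *+ 2 : B) != 0.
Proof. by rewrite -mulr_natr mulf_neq0 ?polyX_eq0 ?natB_neq0. Qed.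

Lemma TayN : Tay \Po (- 'X) = even_poly Tay \Po 'X^2 - (odd_poly Tay \Po 'X^2) * 'X.
Proof.
rewrite {1}[Tay](esym (poly_even_odd Tay)) comp_polyD comp_polyM comp_polyX.
by rewrite -!comp_polyA comp_Xn_poly sqrrN mulrN.
Qed.

Lemma g1E : g1 n = odd_poly Tay \Po 'X^2.
Proof.
have dm : (yB - xB : B) \is monic by rewrite /yB /xB monicXsubC.
have hF1 : f1 n * (yB - xB) = evalB (fgen n) yB - evalB (fgen n) xB.
  rewrite /f1 EFy EFx {1 3}[Tay]psplit1 comp_polyD comp_polyC comp_polyM comp_polyX.
  by rewrite addrAC subrr add0r Pdiv.IdomainMonic.mulpK.
have := congr1 (SB (xB - yB) (xB + yB)) hF1.
rewrite rmorphM !rmorphB SB_x SB_y !SB_evalB SB_x SB_y -subst2E -/(g1 n).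
rewrite !taylor /yB comp_polyXr TayN.
set E := even_poly Tay \Po 'X^2; set O := odd_poly Tay \Po 'X^2.
have eo : Tay = E + O * 'X by rewrite /E /O poly_even_odd.
rewrite {1}eo.
have -> : (xB + 'X - (xB - 'X) : B) = 'X *+ 2 by ring.
have -> : (E + O * 'X - (E - O * 'X) : B) = O * ('X *+ 2) by ring.
by move/(mulIf y2_neq0).
Qed.


Lemma hh : halfB n * 2%:R = 1 :> B.
Proof.
rewrite /halfB.
have -> : (2%:R : B) = ccM 2%:R by rewrite rmorph_nat.
have -> : cc (2%:R^-1)%:MP = ccM (2%:R^-1)%:MP by [].
rewrite -rmorphM.
have -> : (2%:R^-1 : rat)%:MP * 2%:R = 1 :> A.
  have -> : (2%:R : A) = (2%:R : rat)%:MP by rewrite rmorph_nat.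
  rewrite -rmorphM mulVf ?rmorph1 //.
exact: rmorph1.
Qed.

End Poly.



Section Poly2.
Variable n : nat.
Local Notation A := {mpoly rat[n]}.
Local Notation B := {poly {poly A}}.
Local Notation cc := (@cc n).
Local Notation xB := (@xB n).
Local Notation yB := (@yB n).
Local Notation evalB := (@evalB n).
Local Notation Tay := (@Tay n).
Local Notation ccM := (@ccM n).
Local Notation SB := (@SB n).

Lemma half_mid (w : B) : halfB n * (w + w) = w.
Proof.
apply/eqP; rewrite -subr_eq0.
have -> : forall h : B, h * (w + w) - w = w * (h * 2%:R - 1) by move=> h; ring.
by rewrite hh subrr mulr0.
Qed.

Lemma EFh : evalB (fgen n) (halfB n * (xB + yB)) = Tay \Po (halfB n * (yB - xB)).
Proof.
rewrite -taylor; congr (evalB _ _).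
apply/eqP; rewrite -subr_eq0.
have -> : forall h x y : B, h * (x + y) - (x + h * (y - x)) = x * (h * 2%:R - 1) by move=> h x y; ring.
by rewrite hh subrr mulr0.
Qed.


Lemma g3E : g3 n = drop_poly 1 (even_poly Tay) \Po 'X^2.
Proof.
set d : B := yB - xB.
have dm : d ^+ 2 \is monic by rewrite monic_exp // /d /yB /xB monicXsubC.
have hF3 : f3 n * d ^+ 2 = 2%:R * (evalB (fgen n) yB - 2%:R * evalB (fgen n) (halfB n * (xB + yB)) + evalB (fgen n) xB).
  rewrite /f3 EFy EFh EFx -/d.
  have eT := psplit2 Tay.
  set t0 := Tay`_0 in eT *; set t1 := Tay`_1 in eT; set D := drop_poly 2 Tay in eT.
  have c1 w : Tay \Po w = t0%:P + t1%:P * w + (D \Po w) * w ^+ 2.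
    by rewrite {1}eT !comp_polyD !comp_polyM !comp_polyC !comp_polyX expr2.
  rewrite !c1.
  move: (halfB n) (hh n) => h hh2.
  set K := 2%:R * ((D \Po d) - 2%:R * h ^+ 2 * (D \Po (h * d))).
  have -> : 2%:R * (t0%:P + t1%:P * d + (D \Po d) * d ^+ 2 -
     2%:R * (t0%:P + t1%:P * (h * d) + (D \Po (h * d)) * (h * d) ^+ 2) + t0%:P) = K * d ^+ 2.
    apply/eqP; rewrite -subr_eq0 /K.
    move: (t0%:P) (t1%:P) (D \Po d) (D \Po (h * d)) hh2 => a b c e hh2.
    have -> : 2%:R * (a + b * d + c * d ^+ 2 - 2%:R * (a + b * (h * d) + e * (h * d) ^+ 2) + a) -
        2%:R * (c - 2%:R * h ^+ 2 * e) * d ^+ 2 = - (2%:R * b * d) * (h * 2%:R - 1) by ring.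
    by rewrite hh2 subrr mulr0.
  by rewrite Pdiv.IdomainMonic.mulpK.
have := congr1 (SB (xB - yB) (xB + yB)) hF3.
rewrite rmorphM rmorphXn !rmorphD !rmorphN !rmorphM !rmorph_nat !rmorphD !rmorphN !rmorphM !rmorph_nat !SB_evalB -subst2E -/(g3 n).
rewrite !SB_x !SB_y rmorphM rmorphD SB_x SB_y (SB_cc (xB - yB) (xB + yB) (2%:R^-1)%:MP : SB _ _ (halfB n) = halfB n).
have -> : (xB - yB + (xB + yB) : B) = xB + xB by move: (xB) (yB) => x y; ring.
rewrite half_mid EFx !taylor /yB comp_polyXr TayN.
set E := even_poly Tay \Po 'X^2; set O := odd_poly Tay \Po 'X^2.
have eo : Tay = E + O * 'X by rewrite /E /O poly_even_odd.
set Q := drop_poly 1 (even_poly Tay) \Po 'X^2.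
have eE : E = (Tay`_0)%:P + Q * 'X^2.
  rewrite /E {1}(psplit1 (even_poly Tay)) comp_polyD comp_polyC comp_polyM comp_polyX.
  by rewrite coef_even_poly.
rewrite {1}eo eE.
have -> : ((xB + 'X - (xB - 'X)) ^+ 2 : B) = ('X *+ 2) ^+ 2 by move: (xB) ('X : B) => x y; ring.
have gen : forall a q o x : B, 2%:R * (a + q * x ^+ 2 + o * x - 2%:R * a + (a + q * x ^+ 2 - o * x))
   = q * (x *+ 2) ^+ 2 by move=> a q o x; ring.
rewrite gen.
by move/(mulIf (expf_neq0 2 (y2_neq0 n))).
Qed.

End Poly2.



Section Final.
Variable n : nat.
Hypothesis hn : (3 <= n)%N.
Local Notation A := {mpoly rat[n]}.
Local Notation B := {poly {poly A}}.
Local Notation Tay := (@Tay n).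
Local Notation phiN := (@phiN n).

Definition PP : B := odd_poly Tay.
Definition QQ : B := drop_poly 1 (even_poly Tay).

Lemma coefPP i : PP`_i = phiN i.*2.+1.
Proof. by rewrite /PP coef_odd_poly coef_Tay. Qed.
Lemma coefQQ i : QQ`_i = phiN (i.*2.+2).
Proof. by rewrite /QQ coef_drop_poly coef_even_poly coef_Tay addn1. Qed.

Lemma size_eqK (r : B) K : r`_K != 0 -> (forall i, (K < i)%N -> r`_i = 0) -> size r = K.+1.
Proof.
move=> hK hz; apply/eqP; rewrite eqn_leq; apply/andP; split.
  by apply/leq_sizeP => i hi; apply: hz.
by rewrite ltnNge; apply/negP => /leq_sizeP /(_ K (leqnn K)) /eqP; apply/negP.
Qed.

Lemma size_PP : size PP = ((n - 1)./2).+1.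
Proof.
apply: size_eqK; first by rewrite coefPP phiN_neq0 //; lia.
by move=> i hi; rewrite coefPP phiN_gt //; lia.
Qed.

Lemma size_QQ : size QQ = ((n - 2)./2).+1.
Proof.
apply: size_eqK; first by rewrite coefQQ phiN_neq0 //; lia.
by move=> i hi; rewrite coefQQ phiN_gt //; lia.
Qed.

Lemma phi_pos (m : int) k : m = k%:Z -> (0 < k)%N -> phi n m = phiN k.
Proof.
move=> -> hk; rewrite /phi.
case: ifP => h; first by [].
by rewrite phiN_gt //; move/negbT: h; rewrite negb_and; lia.
Qed.

Lemma phi_npos (m : int) : (m <= 0)%R -> phi n m = 0.
Proof. by move=> hm; rewrite /phi; case: ifP => // /andP [h1 _]; lia. Qed.


Definition fperm i := if odd i then i./2 else ((n - 2)./2 + i./2)%N.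

Lemma entryE i j : (i < n - 2)%N -> (j < n - 2)%N ->
  Mentry n i.+1 j.+1 = Sylf PP QQ (fperm i) j.
Proof.
move=> hi hj; rewrite /Mentry /Sylf size_QQ /fperm /=.
case oi: (odd i) => /=.
- have -> : (i./2 < (n - 2)./2)%N by lia.
  case: (leqP i./2 j) => hij.
  + rewrite mulr1n coefPP; apply: phi_pos; lia.
  + rewrite mulr0n; apply: phi_npos; lia.
- have -> : ((n - 2)./2 + i./2 < (n - 2)./2)%N = false by lia.
  rewrite addKn.
  case: (leqP i./2 j) => hij.
  + rewrite mulr1n coefQQ; apply: phi_pos; lia.
  + rewrite mulr0n; apply: phi_npos; lia.
Qed.

Lemma main : Gres n = Hminor n ^+ 2.
Proof.
have P0 : PP != 0 by rewrite -size_poly_gt0 size_PP.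
have Q0 : QQ != 0 by rewrite -size_poly_gt0 size_QQ.
rewrite /Gres g1E g3E -/PP -/QQ res_compX2 //.
rewrite (@resE _ PP QQ (n - 2)); last by rewrite size_PP size_QQ /=; lia.
rewrite /Hminor; symmetry.
apply: (@det_rowperm_sq _ (n - 2) (fun i j => Mentry n i.+1 j.+1) (Sylf PP QQ) fperm).
- by move=> i hi; rewrite /fperm; case: ifP => _; lia.
- by move=> i j hi hj; rewrite /fperm; case: ifP => oi; case: ifP => oj; lia.
- by move=> i j hi hj; apply: entryE.
Qed.

End Final.


Theorem lemma6 (n : nat) (hn : (3 <= n)%N) : Gres n = (Hminor n) ^+ 2.
Proof. exact: main. Qed.
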